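(* Let $p,q$ be positive integers with $\gcd(p,q)=2$. On the square billiard, consider the billiard trajectory generated by $\langle P_0,\alpha_0\rangle$ with $\tan(\alpha_0)=p/q$ fixed and $P_0\in[0,1)$. Then: (i) if $P_0=\frac{2\ell}{p}$ for some $\ell\in\{0,1,\dots,\frac{p}{2}-1\}$, the trajectory is a singular orbit, and it lies on a generalised diagonal of length $\frac{p+q}{2}-2$ having exactly $\frac{p}{2}-1$ collision points on the sides $\mathsf{AB}$ or $\mathsf{CD}$ and exactly $\frac{q}{2}-1$ collision points on the sides $\mathsf{BC}$ or $\mathsf{DA}$; (ii) otherwise the trajectory is a periodic orbit of period $p+q$ belonging to the class $\mathcal{C}_{p+q}(p)$.
   Context: Square billiard: unit square with vertices $\mathsf{A}=(0,0),\mathsf{B}=(1,0),\mathsf{C}=(1,1),\mathsf{D}=(0,1)$; a point moves in straight lines, reflecting elastically at the sides; a trajectory reaching a vertex terminates (singular orbit). A pair $\langle P_0,\alpha_0\rangle$ generates the trajectory with a collision at $(P_0,0)$ on $\mathsf{AB}$ whose outgoing segment makes angle $\alpha_0\in(0,\pi/2]$ with $\mathsf{AB}$ (direction of motion not distinguished; for $P_0=0$ the trajectory starts at vertex $\mathsf{A}$). Period of a periodic orbit = number of distinct collision points. The class $\mathcal{C}_K(p)$ consists of all period-$K$ orbits with exactly $p$ distinct collision points on $\mathsf{AB}$ or $\mathsf{CD}$ (and $K-p$ on $\mathsf{BC}$ or $\mathsf{DA}$). A generalised diagonal is a singular orbit starting at a vertex; its length is the number of its non-vertex collision points. *)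

(* Defs.v *)
From Stdlib Require Import Reals ZArith Arith List.
Open Scope R_scope.

Definition is_int (x : R) : Prop := exists z : Z, x = IZR z.

(* The square billiard is obtained by folding straight lines in the plane
   (standard unfolding): reflection at the sides x=0,1 / y=0,1 corresponds
   to the triangle wave below. *)
Definition fold (x : R) : R :=
  let m := x - 2 * IZR (Int_part (x / 2)) in
  if Rle_dec m 1 then m else 2 - m.

(* An (unfolded) billiard path: a straight line t |-> (px + t dc, py + t ds)
   in the plane, restricted to the set of times [dom]. *)
Record path := mkPath { px : R; py : R; dc : R; ds : R; dom : R -> Prop }.

Definition point (g : path) (t : R) : R * R :=
  (fold (px g + t * dc g), fold (py g + t * ds g)).

Definition vtime (x0 y0 c s t : R) : Prop :=
  is_int (x0 + t * c) /\ is_int (y0 + t * s).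
Definition ctime (x0 y0 c s t : R) : Prop :=
  is_int (x0 + t * c) \/ is_int (y0 + t * s).

(* The trajectory generated by <P0, alpha0>: collision at (P0,0) with outgoing
   direction (cos alpha0, sin alpha0); both directions of motion are included,
   and the trajectory terminates when it reaches a vertex.  If P0 = 0 it
   starts at the vertex A and only the outgoing part is kept. *)
Definition traj (P0 alpha0 : R) : path :=
  mkPath P0 0 (cos alpha0) (sin alpha0)
    (fun t =>
       (0 <= t /\ forall s, 0 < s < t -> ~ vtime P0 0 (cos alpha0) (sin alpha0) s)
    \/ (t <= 0 /\ ~ vtime P0 0 (cos alpha0) (sin alpha0) 0 /\
        forall s, t < s < 0 -> ~ vtime P0 0 (cos alpha0) (sin alpha0) s)).

Definition diag (m n : Z) (theta : R) : path :=
  mkPath (IZR m) (IZR n) (cos theta) (sin theta)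
    (fun t => 0 <= t /\
       forall s, 0 < s < t -> ~ vtime (IZR m) (IZR n) (cos theta) (sin theta) s).

Definition is_vtime (g : path) (t : R) := vtime (px g) (py g) (dc g) (ds g) t.
Definition is_ctime (g : path) (t : R) := ctime (px g) (py g) (dc g) (ds g) t.

Definition points (g : path) (z : R * R) : Prop :=
  exists t, dom g t /\ z = point g t.

Definition coll_points (g : path) (z : R * R) : Prop :=
  exists t, dom g t /\ is_ctime g t /\ z = point g t.

Definition is_vertex (z : R * R) : Prop :=
  (fst z = 0 \/ fst z = 1) /\ (snd z = 0 \/ snd z = 1).

Definition ncoll (g : path) (z : R * R) : Prop :=
  coll_points g z /\ ~ is_vertex z.
(* non-vertex collision points on AB or CD *)
Definition hcoll (g : path) (z : R * R) : Prop :=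
  coll_points g z /\ (snd z = 0 \/ snd z = 1) /\ ~ is_vertex z.
(* non-vertex collision points on BC or DA *)
Definition vcoll (g : path) (z : R * R) : Prop :=
  coll_points g z /\ (fst z = 0 \/ fst z = 1) /\ ~ is_vertex z.

Definition card_eq (S : R * R -> Prop) (n : nat) : Prop :=
  exists l : list (R * R), NoDup l /\ length l = n /\ forall z, In z l <-> S z.

Definition singular (g : path) : Prop :=
  exists t, dom g t /\ is_vtime g t.

Definition is_gen_diag (g : path) : Prop :=
  exists (m n : Z) (theta : R), cos theta <> 0 /\ sin theta <> 0 /\ g = diag m n theta.

Definition gd_length (g : path) (n : nat) : Prop := card_eq (ncoll g) n.

Definition periodic (g : path) : Prop :=
  ~ singular g /\
  exists T, 0 < T /\ forall t, dom g t -> dom g (t + T) /\ point g (t + T) = point g t.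

(* class C_K(p): period-K periodic orbits (K distinct collision points) with
   exactly p collision points on AB or CD and K-p on BC or DA *)
Definition in_class (K p : nat) (g : path) : Prop :=
  periodic g /\ card_eq (coll_points g) K /\
  card_eq (hcoll g) p /\ card_eq (vcoll g) (K - p).

(* Main.v *)
Require Import Defs.
From Stdlib Require Import Reals ZArith Arith List Lia Lra Znumtheory.
Open Scope R_scope.

Definition E (x y : R) : Prop := exists z : Z, x - y = 2 * IZR z \/ x + y = 2 * IZR z.

Lemma E_sym x y : E x y -> E y x.
Proof. intros [z [H|H]]; [exists (-z)%Z; left; rewrite opp_IZR; lra | exists z; right; lra]. Qed.

Lemma E_trans x y w : E x y -> E y w -> E x w.
Proof.
  intros [z1 [H1|H1]] [z2 [H2|H2]].
  - exists (z1+z2)%Z; left; rewrite plus_IZR; lra.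
  - exists (z1+z2)%Z; right; rewrite plus_IZR; lra.
  - exists (z1-z2)%Z; right; rewrite minus_IZR; lra.
  - exists (z1-z2)%Z; left; rewrite minus_IZR; lra.
Qed.

Lemma fold_spec x : 0 <= fold x <= 1 /\ E x (fold x).
Proof.
  unfold fold. destruct (base_Int_part (x/2)) as [H1 H2].
  set (z := Int_part (x/2)) in *.
  destruct (Rle_dec (x - 2 * IZR z) 1).
  - split; [lra|]. exists z; left; lra.
  - split; [lra|]. exists (z+1)%Z; right; rewrite plus_IZR; lra.
Qed.

Lemma int_between (z : Z) (lo hi : Z) : IZR lo <= IZR z <= IZR hi -> (lo <= z <= hi)%Z.
Proof. intros [H1 H2]; split; apply le_IZR; auto. Qed.

Lemma uniq_fold r r' : 0<=r<=1 -> 0<=r'<=1 -> E r r' -> r = r'.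
Proof.
  intros H1 H2 [z [H|H]].
  - assert (IZR (-1) < IZR z < IZR 1) by lra.
    destruct H0 as [Ha Hb]; apply lt_IZR in Ha; apply lt_IZR in Hb.
    assert (z = 0%Z) by lia. subst. simpl in H. lra.
  - assert (IZR (-1) < IZR z < IZR 2) by lra.
    destruct H0 as [Ha Hb]; apply lt_IZR in Ha; apply lt_IZR in Hb.
    assert (z = 0%Z \/ z = 1%Z) as [->| ->] by lia; simpl in H; lra.
Qed.

Lemma fold_eq_iff x y : fold x = fold y <-> E x y.
Proof.
  destruct (fold_spec x) as [Hx Ex]; destruct (fold_spec y) as [Hy Ey]; split.
  - intro H. rewrite <- H in Ey. eapply E_trans; [exact Ex| apply E_sym; exact Ey].
  - intro H. apply uniq_fold; auto.
    eapply E_trans; [apply E_sym; exact Ex|]. eapply E_trans; [exact H| exact Ey].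
Qed.

Lemma E_shift x z : E (x + 2 * IZR z) x.
Proof. exists z; left; lra. Qed.

Lemma fold_int x : is_int x <-> (fold x = 0 \/ fold x = 1).
Proof.
  destruct (fold_spec x) as [Hx [z Ez]]; split.
  - intros [k ->].
    assert (exists m, fold (IZR k) = IZR m) as [m Hm].
    { destruct Ez as [Ez|Ez]; [exists (k - 2*z)%Z | exists (2*z - k)%Z];
      rewrite ?minus_IZR, ?mult_IZR; simpl; lra. }
    rewrite Hm in Hx |- *. apply int_between with (lo:=0%Z) (hi:=1%Z) in Hx.
    assert (m = 0%Z \/ m = 1%Z) as [->| ->] by lia; simpl; auto.
  - intros [H|H]; rewrite H in Ez; destruct Ez as [Ez|Ez].
    + exists (2*z)%Z; rewrite mult_IZR; simpl; lra.
    + exists (2*z)%Z; rewrite mult_IZR; simpl; lra.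
    + exists (2*z+1)%Z; rewrite plus_IZR, mult_IZR; simpl; lra.
    + exists (2*z-1)%Z; rewrite minus_IZR, mult_IZR; simpl; lra.
Qed.

Lemma vertex_iff x y : is_vertex (fold x, fold y) <-> is_int x /\ is_int y.
Proof. unfold is_vertex; simpl; rewrite !fold_int; tauto. Qed.

Definition gp (X0 Y0 al be : R) (r : Z) : R*R := (fold (IZR r), fold (Y0 + al * (IZR r - X0) / be)).
Definition swap (z : R*R) : R*R := (snd z, fst z).
Definition Zr (lo : Z) (n : nat) : list Z := map (fun i => (lo + Z.of_nat i)%Z) (seq 0 n).

Lemma In_Zr lo n r : In r (Zr lo n) <-> (lo <= r < lo + Z.of_nat n)%Z.
Proof.
  unfold Zr; rewrite in_map_iff; split.
  - intros [i [<- Hi]]; apply in_seq in Hi; lia.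
  - intro H; exists (Z.to_nat (r - lo)); rewrite in_seq; split; lia.
Qed.

Lemma Zr_length lo n : length (Zr lo n) = n.
Proof. unfold Zr; rewrite length_map, length_seq; auto. Qed.

Lemma NoDup_Zr lo n : NoDup (Zr lo n).
Proof.
  unfold Zr; apply NoDup_map_NoDup_ForallPairs; [|apply seq_NoDup].
  intros x y _ _ H; lia.
Qed.

Lemma NoDup_map_on {B} (f : Z -> B) lo n :
  (forall r r', (lo <= r < lo + Z.of_nat n)%Z -> (lo <= r' < lo + Z.of_nat n)%Z -> f r = f r' -> r = r') ->
  NoDup (map f (Zr lo n)).
Proof.
  intro H; apply NoDup_map_NoDup_ForallPairs; [|apply NoDup_Zr].
  intros x y Hx Hy; apply In_Zr in Hx; apply In_Zr in Hy; auto.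
Qed.

Lemma swap_inj z z' : swap z = swap z' -> z = z'.
Proof. destruct z, z'; unfold swap; simpl; intro H; inversion H; auto. Qed.

Lemma gp_exact X0 Y0 A B tau K : IZR B <> 0 -> X0 + IZR B * tau = IZR K ->
  (fold (X0 + IZR B * tau), fold (Y0 + IZR A * tau)) = gp X0 Y0 (IZR A) (IZR B) K.
Proof.
  intros HB HK; unfold gp; rewrite HK; f_equal; f_equal.
  rewrite <- HK; field; auto.
Qed.

Lemma gp_period X0 Y0 A B K w : IZR B <> 0 ->
  gp X0 Y0 (IZR A) (IZR B) (K + 2*B*w) = gp X0 Y0 (IZR A) (IZR B) K.
Proof.
  intro HB; unfold gp; f_equal; apply fold_eq_iff.
  - exists (B*w)%Z; left; rewrite plus_IZR, !mult_IZR; simpl; lra.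
  - exists (A*w)%Z; left; rewrite plus_IZR, !mult_IZR; simpl; field; auto.
Qed.

Lemma gp_reduce X0 Y0 A B K : (0 < B)%Z ->
  exists r, (0 <= r < 0 + Z.of_nat (Z.to_nat (2*B)))%Z /\
    gp X0 Y0 (IZR A) (IZR B) K = gp X0 Y0 (IZR A) (IZR B) r.
Proof.
  intro HB. exists (K mod (2*B))%Z. split.
  - assert (0 < 2*B)%Z by lia. pose proof (Z.mod_pos_bound K (2*B) H). lia.
  - rewrite (Z.div_mod K (2*B)) at 1 by lia.
    replace (2 * B * (K / (2 * B)) + K mod (2 * B))%Z with (K mod (2*B) + 2*B*(K/(2*B)))%Z by ring.
    apply gp_period. apply not_0_IZR; lia.
Qed.

Lemma gp_attain X0 Y0 A B r : IZR B <> 0 ->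
  let tau := (IZR r - X0) / IZR B in
  (fold (X0 + IZR B * tau), fold (Y0 + IZR A * tau)) = gp X0 Y0 (IZR A) (IZR B) r.
Proof. intros HB tau; apply gp_exact; auto. unfold tau; field; auto. Qed.

Lemma IZR_inj x y : IZR x = IZR y -> x = y.
Proof. apply eq_IZR. Qed.

Lemma gp_eq X0 Y0 A B r r' : IZR B <> 0 ->
  gp X0 Y0 (IZR A) (IZR B) r = gp X0 Y0 (IZR A) (IZR B) r' ->
  (exists e, r - r' = 2*e)%Z /\
  ((exists z, A*(r-r') = 2*B*z)%Z \/
   exists z:Z, IZR B * (2*Y0) + IZR A * (IZR r + IZR r' - 2*X0) = 2 * IZR B * IZR z).
Proof.
  intros HB H; unfold gp in H; inversion H as [[H1 H2]].
  apply fold_eq_iff in H1; apply fold_eq_iff in H2.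
  assert (Hm : IZR A * (IZR r - IZR r') = IZR B * ((Y0 + IZR A * (IZR r - X0) / IZR B) - (Y0 + IZR A * (IZR r' - X0) / IZR B))) by (field; auto).
  assert (Hp : IZR B * (2*Y0) + IZR A * (IZR r + IZR r' - 2*X0) = IZR B * ((Y0 + IZR A * (IZR r - X0) / IZR B) + (Y0 + IZR A * (IZR r' - X0) / IZR B))) by (field; auto).
  split.
  - destruct H1 as [z [H1|H1]].
    + exists z. apply IZR_inj; rewrite minus_IZR, mult_IZR; simpl; lra.
    + exists (z - r')%Z. apply IZR_inj; rewrite !minus_IZR, mult_IZR, minus_IZR; simpl; lra.
  - destruct H2 as [z2 [H2|H2]].
    + left; exists z2. apply IZR_inj; rewrite !mult_IZR, minus_IZR; simpl.
      rewrite Hm, H2; ring.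
    + right; exists z2. rewrite Hp, H2; ring.
Qed.

Lemma parity_div A B r r' : (0 < B)%Z -> Z.gcd A B = 1%Z ->
  (0 <= r < 2*B)%Z -> (0 <= r' < 2*B)%Z -> (exists e, r - r' = 2*e)%Z ->
  (exists z, A*(r-r') = 2*B*z)%Z -> r = r'.
Proof.
  intros HB Hg Hr Hr' [e He] [z Hz].
  assert (Hd : (B | A * e)%Z). { exists z. nia. }
  apply Z.gauss in Hd; [| rewrite Z.gcd_comm; auto].
  destruct Hd as [f Hf]. subst e.
  assert (f = 0)%Z. { destruct (Z.lt_trichotomy f 0) as [Hf|[Hf|Hf]]; [nia|auto|nia]. }
  subst f; lia.
Qed.

Lemma plus_contra A B j j' w : (0 < B)%Z -> Z.gcd A B = 1%Z ->
  (1 <= j <= B-1)%Z -> (1 <= j' <= B-1)%Z -> (exists e, j - j' = 2*e)%Z ->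
  (A * (j + j') = 2 * B * w)%Z -> False.
Proof.
  intros HB Hg Hj Hj' [e He] Hw.
  assert (Hd : (B | A * (j+j'))%Z). { exists (2*w)%Z. nia. }
  apply Z.gauss in Hd; [| rewrite Z.gcd_comm; auto].
  destruct Hd as [f Hf].
  assert (f = 1)%Z by nia. subst f.
  assert (Ha2 : (2 | A)%Z). { exists w. nia. }
  assert (Hb2 : (2 | B)%Z). { exists (j' + e)%Z. nia. }
  pose proof (Z.gcd_greatest _ _ _ Ha2 Hb2). rewrite Hg in H.
  apply Z.divide_pos_le in H; lia.
Qed.

Lemma pt_traj P0 al a b k t : cos al = IZR b * k -> sin al = IZR a * k ->
  point (traj P0 al) t = (fold (P0 + IZR b * (t*k)), fold (0 + IZR a * (t*k))).
Proof. intros Hc Hs; unfold point; simpl; rewrite Hc, Hs; f_equal; f_equal; ring. Qed.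

Lemma vt_traj P0 al a b k t : cos al = IZR b * k -> sin al = IZR a * k ->
  vtime P0 0 (cos al) (sin al) t <-> is_int (P0 + IZR b * (t*k)) /\ is_int (0 + IZR a * (t*k)).
Proof. intros Hc Hs; unfold vtime; rewrite Hc, Hs.
  replace (t * (IZR b * k)) with (IZR b * (t*k)) by ring.
  replace (t * (IZR a * k)) with (IZR a * (t*k)) by ring. tauto. Qed.

Lemma ct_traj P0 al a b k t : cos al = IZR b * k -> sin al = IZR a * k ->
  is_ctime (traj P0 al) t <-> is_int (P0 + IZR b * (t*k)) \/ is_int (0 + IZR a * (t*k)).
Proof. intros Hc Hs; unfold is_ctime, ctime; simpl; rewrite Hc, Hs.
  replace (t * (IZR b * k)) with (IZR b * (t*k)) by ring.
  replace (t * (IZR a * k)) with (IZR a * (t*k)) by ring. tauto. Qed.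

Section S2.
Context (a b : Z) (Ha : (0 < a)%Z) (Hb : (0 < b)%Z) (Hg : Z.gcd a b = 1%Z)
  (k P0 al : R) (Hk : 0 < k) (Hc : cos al = IZR b * k) (Hs : sin al = IZR a * k)
  (Gen : ~ exists z, IZR a * P0 = IZR z).

Let aR : IZR a <> 0. Proof. apply not_0_IZR; lia. Qed.
Let bR : IZR b <> 0. Proof. apply not_0_IZR; lia. Qed.

Lemma ii_novt t : ~ vtime P0 0 (cos al) (sin al) t.
Proof.
  rewrite (vt_traj _ _ a b k); auto. intros [[M HM] [N HN]]. apply Gen.
  exists (a*M - b*N)%Z. rewrite minus_IZR, !mult_IZR, <- HM, <- HN. ring.
Qed.

Lemma ii_dom t : dom (traj P0 al) t.
Proof.
  simpl. destruct (Rle_dec 0 t).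
  - left; split; auto; intros; apply ii_novt.
  - right; split; [lra| split; [apply ii_novt| intros; apply ii_novt]].
Qed.

Definition VL := map (gp P0 0 (IZR a) (IZR b)) (Zr 0 (Z.to_nat (2*b))).
Definition HL := map (fun r => swap (gp 0 P0 (IZR b) (IZR a) r)) (Zr 0 (Z.to_nat (2*a))).

Lemma ii_coll z : coll_points (traj P0 al) z <-> In z (VL ++ HL).
Proof.
  split.
  - intros [t [_ [Hct ->]]]. rewrite (pt_traj _ _ a b k); auto.
    rewrite (ct_traj _ _ a b k) in Hct; auto. apply in_or_app.
    destruct Hct as [[K HK]|[N HN]].
    + left. rewrite (gp_exact _ _ _ _ _ K); auto.
      destruct (gp_reduce P0 0 a b K Hb) as [r [Hr ->]].
      unfold VL; apply in_map; apply In_Zr; auto.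
    + right. 
      assert (Hsw : (fold (P0 + IZR b * (t * k)), fold (0 + IZR a * (t * k))) =
              swap (fold (0 + IZR a * (t * k)), fold (P0 + IZR b * (t * k)))) by reflexivity.
      rewrite Hsw, (gp_exact _ _ _ _ _ N); auto.
      destruct (gp_reduce 0 P0 b a N Ha) as [r [Hr ->]].
      unfold HL; apply (in_map (fun r => swap (gp 0 P0 (IZR b) (IZR a) r))); apply In_Zr; auto.
  - intro H; apply in_app_or in H; destruct H as [H|H].
    + unfold VL in H; apply in_map_iff in H; destruct H as [r [<- _]].
      exists (((IZR r - P0) / IZR b) / k). split; [apply ii_dom|].
      split.
      * rewrite (ct_traj _ _ a b k); auto. left. exists r. field; split; auto; lra.
      * rewrite (pt_traj _ _ a b k); auto.
        replace (((IZR r - P0) / IZR b) / k * k) with ((IZR r - P0) / IZR b) by (field; lra).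
        symmetry; apply gp_attain; auto.
    + unfold HL in H; apply in_map_iff in H; destruct H as [r [<- _]].
      exists (((IZR r - 0) / IZR a) / k). split; [apply ii_dom|].
      split.
      * rewrite (ct_traj _ _ a b k); auto. right. exists r. field; split; auto; lra.
      * rewrite (pt_traj _ _ a b k); auto.
        replace (((IZR r - 0) / IZR a) / k * k) with ((IZR r - 0) / IZR a) by (field; lra).
        pose proof (gp_attain 0 P0 b a r aR) as HH. simpl in HH. rewrite <- HH. reflexivity.
Qed.

Lemma V_not_int r : ~ is_int (0 + IZR a * (IZR r - P0) / IZR b).
Proof.
  intros [w Hw]. apply Gen. exists (a*r - b*w)%Z. rewrite minus_IZR, !mult_IZR, <- Hw.
  field; auto.
Qed.

Lemma H_not_int r : ~ is_int (P0 + IZR b * (IZR r - 0) / IZR a).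
Proof.
  intros [w Hw]. apply Gen. exists (a*w - b*r)%Z. rewrite minus_IZR, !mult_IZR, <- Hw.
  field; auto.
Qed.

Lemma VL_nodup : NoDup VL.
Proof.
  apply NoDup_map_on. intros r r' Hr Hr' H.
  destruct (gp_eq _ _ _ _ _ _ bR H) as [He [Hz|[z Hz]]].
  - apply (parity_div a b); auto; lia.
  - exfalso; destruct He as [e He]. apply Gen. exists (a*(e + r') - b*z)%Z.
    assert (IZR r = IZR r' + 2 * IZR e) by (replace r with (r' + 2*e)%Z by lia; rewrite plus_IZR, mult_IZR; auto).
    rewrite H0 in Hz. rewrite minus_IZR, !mult_IZR, plus_IZR. nra.
Qed.

Lemma HL_nodup : NoDup HL.
Proof.
  apply NoDup_map_on. intros r r' Hr Hr' H. apply swap_inj in H.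
  destruct (gp_eq _ _ _ _ _ _ aR H) as [He [Hz|[z Hz]]].
  - apply (parity_div b a); auto; try lia. rewrite Z.gcd_comm; auto.
  - exfalso; destruct He as [e He]. apply Gen. exists (a*z - b*(e + r'))%Z.
    assert (IZR r = IZR r' + 2 * IZR e) by (replace r with (r' + 2*e)%Z by lia; rewrite plus_IZR, mult_IZR; auto).
    rewrite H0 in Hz. rewrite minus_IZR, !mult_IZR, plus_IZR. nra.
Qed.

Lemma VL_vert z : In z VL -> ~ is_vertex z /\ (fst z = 0 \/ fst z = 1) /\ ~ (snd z = 0 \/ snd z = 1).
Proof.
  unfold VL; intro H; apply in_map_iff in H; destruct H as [r [<- _]].
  unfold gp; simpl. rewrite vertex_iff, !fold_int.
  pose proof (V_not_int r). rewrite fold_int in H.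
  split; [tauto|]. split; [apply fold_int; exists r; auto| auto].
Qed.

Lemma HL_hor z : In z HL -> ~ is_vertex z /\ (snd z = 0 \/ snd z = 1) /\ ~ (fst z = 0 \/ fst z = 1).
Proof.
  unfold HL; intro H; apply in_map_iff in H; destruct H as [r [<- _]].
  unfold gp, swap; simpl. rewrite vertex_iff, !fold_int.
  pose proof (H_not_int r). rewrite fold_int in H.
  split; [tauto|]. split; [apply fold_int; exists r; auto| auto].
Qed.

Lemma ii_nodup : NoDup (VL ++ HL).
Proof.
  apply NoDup_app; [apply VL_nodup| apply HL_nodup|].
  intros z H1 H2. apply VL_vert in H1; apply HL_hor in H2. tauto.
Qed.

Lemma ii_hcoll z : hcoll (traj P0 al) z <-> In z HL.
Proof.
  unfold hcoll; rewrite ii_coll; split.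
  - intros [H [H1 H2]]. apply in_app_or in H; destruct H as [H|H]; auto.
    apply VL_vert in H. tauto.
  - intro H. split; [apply in_or_app; auto|]. apply HL_hor in H; tauto.
Qed.

Lemma ii_vcoll z : vcoll (traj P0 al) z <-> In z VL.
Proof.
  unfold vcoll; rewrite ii_coll; split.
  - intros [H [H1 H2]]. apply in_app_or in H; destruct H as [H|H]; auto.
    apply HL_hor in H. unfold is_vertex in H2. tauto.
  - intro H. split; [apply in_or_app; auto|]. apply VL_vert in H; tauto.
Qed.

Lemma ii_periodic : periodic (traj P0 al).
Proof.
  split.
  - intros [t [_ Hv]]. exact (ii_novt t Hv).
  - exists (2 / k). split; [apply Rdiv_lt_0_compat; lra|].
    intros t _. split; [apply ii_dom|].
    rewrite !(pt_traj _ _ a b k); auto. f_equal; apply fold_eq_iff.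
    + exists b; left. field; lra.
    + exists a; left. field; lra.
Qed.

End S2.

Lemma pt_diag m n al a b k t : cos al = IZR b * k -> sin al = IZR a * k ->
  point (diag m n al) t = (fold (IZR m + IZR b * (t*k)), fold (IZR n + IZR a * (t*k))).
Proof. intros Hc Hs; unfold point; simpl; rewrite Hc, Hs; f_equal; f_equal; ring. Qed.

Lemma vt_diag m n al a b k t : cos al = IZR b * k -> sin al = IZR a * k ->
  vtime (IZR m) (IZR n) (cos al) (sin al) t <-> is_int (IZR m + IZR b * (t*k)) /\ is_int (IZR n + IZR a * (t*k)).
Proof. intros Hc Hs; unfold vtime; rewrite Hc, Hs.
  replace (t * (IZR b * k)) with (IZR b * (t*k)) by ring.
  replace (t * (IZR a * k)) with (IZR a * (t*k)) by ring. tauto. Qed.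

Lemma ct_diag m n al a b k t : cos al = IZR b * k -> sin al = IZR a * k ->
  is_ctime (diag m n al) t <-> is_int (IZR m + IZR b * (t*k)) \/ is_int (IZR n + IZR a * (t*k)).
Proof. intros Hc Hs; unfold is_ctime, ctime; simpl; rewrite Hc, Hs.
  replace (t * (IZR b * k)) with (IZR b * (t*k)) by ring.
  replace (t * (IZR a * k)) with (IZR a * (t*k)) by ring. tauto. Qed.

Section S1.
Context (a b : Z) (Ha : (0 < a)%Z) (Hb : (0 < b)%Z) (Hg : Z.gcd a b = 1%Z)
  (u v : Z) (Hbez : (u*a + v*b = 1)%Z)
  (k al : R) (Hk : 0 < k) (Hc : cos al = IZR b * k) (Hs : sin al = IZR a * k)
  (l n0 m0 : Z) (Hl : (0 <= l < a)%Z) (Hn0 : (-a < n0 <= 0)%Z) (Hm0 : (l + b*n0 = a*m0)%Z).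

Let aR : IZR a <> 0. Proof. apply not_0_IZR; lia. Qed.
Let bR : IZR b <> 0. Proof. apply not_0_IZR; lia. Qed.
Let P0 := IZR l / IZR a.
Let g := diag m0 n0 al.

Lemma int_tau tau : is_int (IZR m0 + IZR b * tau) /\ is_int (IZR n0 + IZR a * tau) <-> exists z, tau = IZR z.
Proof.
  split.
  - intros [[M HM] [N HN]]. exists (u*(N - n0) + v*(M - m0))%Z.
    rewrite plus_IZR, !mult_IZR, !minus_IZR, <- HM, <- HN.
    assert (IZR u * IZR a + IZR v * IZR b = 1) by (rewrite <- !mult_IZR, <- plus_IZR, Hbez; auto).
    replace tau with (tau * (IZR u * IZR a + IZR v * IZR b)) at 1 by (rewrite H; ring). ring.
  - intros [z ->]. split; [exists (m0 + b*z)%Z | exists (n0 + a*z)%Z]; rewrite plus_IZR, mult_IZR; auto.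
Qed.

Lemma g_vt t : is_vtime g t <-> exists z, t*k = IZR z.
Proof. unfold is_vtime, g; simpl. rewrite (vt_diag _ _ _ a b k); auto. apply int_tau. Qed.

Lemma g_vert t : is_vertex (point g t) <-> exists z, t*k = IZR z.
Proof. unfold g; rewrite (pt_diag _ _ _ a b k); auto. rewrite vertex_iff. apply int_tau. Qed.

Lemma g_dom t : dom g t <-> 0 <= t*k <= 1.
Proof.
  unfold g; simpl. split.
  - intros [H1 H2]. split; [nra|].
    destruct (Rle_dec (t*k) 1); auto. exfalso. apply (H2 (1/k)).
    + split; [apply Rdiv_lt_0_compat; lra|]. apply (Rmult_lt_reg_r k); auto. field_simplify; lra.
    + change (is_vtime (diag m0 n0 al) (1/k)). fold g. apply g_vt. exists 1%Z. field; lra.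
  - intros [H1 H2]. split.
    + apply (Rmult_le_reg_r k); auto; lra.
    + intros s' Hs' Hv. change (is_vtime (diag m0 n0 al) s') in Hv. fold g in Hv.
      apply g_vt in Hv. destruct Hv as [z Hz].
      assert (0 < s'*k < 1) by (split; nra).
      rewrite Hz in H. destruct H as [H3 H4]. apply lt_IZR in H3; apply lt_IZR in H4. lia.
Qed.

Definition VLi := map (gp (IZR m0) (IZR n0) (IZR a) (IZR b)) (Zr (m0+1) (Z.to_nat (b-1))).
Definition HLi := map (fun r => swap (gp (IZR n0) (IZR m0) (IZR b) (IZR a) r)) (Zr (n0+1) (Z.to_nat (a-1))).

Lemma tau_bounds (X0 B K : Z) tau : (0 < B)%Z -> IZR X0 + IZR B * tau = IZR K -> 0 <= tau <= 1 ->
  ~ (exists z, tau = IZR z) -> (X0 + 1 <= K < X0 + 1 + Z.of_nat (Z.to_nat (B - 1)))%Z.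
Proof.
  intros HB HK Ht Hn.
  assert (IZR X0 <= IZR K <= IZR (X0 + B)).
  { rewrite plus_IZR. assert (0 < IZR B) by (apply IZR_lt; lia). nra. }
  destruct H as [H1 H2]; apply le_IZR in H1; apply le_IZR in H2.
  assert (K <> X0). { intro; subst. apply Hn. exists 0%Z. assert (IZR B <> 0) by (apply not_0_IZR; lia).
    simpl. apply (Rmult_eq_reg_l (IZR B)); auto. lra. }
  assert (K <> X0 + B)%Z. { intro; subst. apply Hn. exists 1%Z. assert (IZR B <> 0) by (apply not_0_IZR; lia).
    rewrite plus_IZR in HK. simpl. apply (Rmult_eq_reg_l (IZR B)); auto. lra. }
  lia.
Qed.

Lemma i_ncoll z : ncoll g z <-> In z (VLi ++ HLi).
Proof.
  split.
  - intros [[t [Hd [Hct ->]]] Hnv]. rewrite g_vert in Hnv. apply g_dom in Hd.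
    unfold g in *; rewrite (pt_diag _ _ _ a b k); auto.
    rewrite (ct_diag _ _ _ a b k) in Hct; auto. apply in_or_app.
    destruct Hct as [[K HK]|[N HN]].
    + left. rewrite (gp_exact _ _ _ _ _ K); auto.
      unfold VLi; apply in_map; apply In_Zr. eapply tau_bounds; eauto.
    + right.
      assert (Hsw : (fold (IZR m0 + IZR b * (t * k)), fold (IZR n0 + IZR a * (t * k))) =
              swap (fold (IZR n0 + IZR a * (t * k)), fold (IZR m0 + IZR b * (t * k)))) by reflexivity.
      rewrite Hsw, (gp_exact _ _ _ _ _ N); auto.
      unfold HLi; apply (in_map (fun r => swap (gp (IZR n0) (IZR m0) (IZR b) (IZR a) r))); apply In_Zr.
      eapply tau_bounds; eauto.
  - intro H; apply in_app_or in H; destruct H as [H|H].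
    + unfold VLi in H; apply in_map_iff in H; destruct H as [r [<- Hr]]. apply In_Zr in Hr.
      assert (Ht : 0 < (IZR r - IZR m0) / IZR b < 1).
      { assert (IZR m0 + 1 <= IZR r <= IZR m0 + IZR b - 1) by (rewrite <- !plus_IZR, <- minus_IZR; split; apply IZR_le; lia).
        assert (1 <= IZR b) by (apply IZR_le; lia).
        split; [apply Rdiv_lt_0_compat; lra|]. apply (Rmult_lt_reg_r (IZR b)); [lra|]. field_simplify; lra. }
      assert (Htk : ((IZR r - IZR m0) / IZR b) / k * k = (IZR r - IZR m0) / IZR b) by (field; lra).
      split.
      * exists (((IZR r - IZR m0) / IZR b) / k). split; [apply g_dom; lra|]. split.
        -- unfold g; rewrite (ct_diag _ _ _ a b k); auto. left. exists r. rewrite Htk. field; auto.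
        -- unfold g; rewrite (pt_diag _ _ _ a b k); auto. rewrite Htk. symmetry; apply gp_attain; auto.
      * assert (Hp : gp (IZR m0) (IZR n0) (IZR a) (IZR b) r = point g (((IZR r - IZR m0) / IZR b) / k)).
        { unfold g; rewrite (pt_diag _ _ _ a b k); auto. rewrite Htk. symmetry; apply gp_attain; auto. }
        rewrite Hp, g_vert, Htk. intros [z Hz]. rewrite Hz in Ht. destruct Ht as [H1 H2].
        apply lt_IZR in H1; apply lt_IZR in H2. lia.
    + unfold HLi in H; apply in_map_iff in H; destruct H as [r [<- Hr]]. apply In_Zr in Hr.
      assert (Ht : 0 < (IZR r - IZR n0) / IZR a < 1).
      { assert (IZR n0 + 1 <= IZR r <= IZR n0 + IZR a - 1) by (rewrite <- !plus_IZR, <- minus_IZR; split; apply IZR_le; lia).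
        assert (1 <= IZR a) by (apply IZR_le; lia).
        split; [apply Rdiv_lt_0_compat; lra|]. apply (Rmult_lt_reg_r (IZR a)); [lra|]. field_simplify; lra. }
      assert (Htk : ((IZR r - IZR n0) / IZR a) / k * k = (IZR r - IZR n0) / IZR a) by (field; lra).
      assert (Hp : swap (gp (IZR n0) (IZR m0) (IZR b) (IZR a) r) = point g (((IZR r - IZR n0) / IZR a) / k)).
      { unfold g; rewrite (pt_diag _ _ _ a b k); auto. rewrite Htk.
        rewrite <- (gp_attain (IZR n0) (IZR m0) b a r aR). reflexivity. }
      split.
      * exists (((IZR r - IZR n0) / IZR a) / k). split; [apply g_dom; lra|]. split; auto.
        unfold g; rewrite (ct_diag _ _ _ a b k); auto. right. exists r. rewrite Htk. field; auto.
      * rewrite Hp, g_vert, Htk. intros [z Hz]. rewrite Hz in Ht. destruct Ht as [H1 H2].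
        apply lt_IZR in H1; apply lt_IZR in H2. lia.
Qed.

Lemma VLi_nodup : NoDup VLi.
Proof.
  apply NoDup_map_on. intros r r' Hr Hr' H.
  destruct (gp_eq _ _ _ _ _ _ bR H) as [He [Hz|[z Hz]]].
  - assert (r - m0 = r' - m0)%Z; [|lia].
    apply (parity_div a b); auto; try lia.
    destruct He as [e He]; exists e; lia. destruct Hz as [z Hz]; exists z; lia.
  - exfalso. apply (plus_contra a b (r - m0) (r' - m0) (z - n0)); auto; try lia.
    destruct He as [e He]; exists e; lia.
    apply IZR_inj. rewrite !mult_IZR, !minus_IZR, plus_IZR, !minus_IZR. simpl. nra.
Qed.

Lemma HLi_nodup : NoDup HLi.
Proof.
  apply NoDup_map_on. intros r r' Hr Hr' H. apply swap_inj in H.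
  assert (Hg' : Z.gcd b a = 1%Z) by (rewrite Z.gcd_comm; auto).
  destruct (gp_eq _ _ _ _ _ _ aR H) as [He [Hz|[z Hz]]].
  - assert (r - n0 = r' - n0)%Z; [|lia].
    apply (parity_div b a); auto; try lia.
    destruct He as [e He]; exists e; lia. destruct Hz as [z Hz]; exists z; lia.
  - exfalso. apply (plus_contra b a (r - n0) (r' - n0) (z - m0)); auto; try lia.
    destruct He as [e He]; exists e; lia.
    apply IZR_inj. rewrite !mult_IZR, !minus_IZR, plus_IZR, !minus_IZR. simpl. nra.
Qed.

Lemma VLi_prop z : In z VLi -> ncoll g z /\ (fst z = 0 \/ fst z = 1) /\ ~ (snd z = 0 \/ snd z = 1).
Proof.
  intro H. assert (Hn : ncoll g z) by (apply i_ncoll; apply in_or_app; auto).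
  assert (fst z = 0 \/ fst z = 1).
  { unfold VLi in H; apply in_map_iff in H; destruct H as [r [<- _]]. simpl. apply fold_int; exists r; auto. }
  split; auto; split; auto. destruct Hn as [_ Hn]. unfold is_vertex in Hn. tauto.
Qed.

Lemma HLi_prop z : In z HLi -> ncoll g z /\ (snd z = 0 \/ snd z = 1) /\ ~ (fst z = 0 \/ fst z = 1).
Proof.
  intro H. assert (Hn : ncoll g z) by (apply i_ncoll; apply in_or_app; auto).
  assert (snd z = 0 \/ snd z = 1).
  { unfold HLi in H; apply in_map_iff in H; destruct H as [r [<- _]]. simpl. apply fold_int; exists r; auto. }
  split; auto; split; auto. destruct Hn as [_ Hn]. unfold is_vertex in Hn. tauto.
Qed.

Lemma i_nodup : NoDup (VLi ++ HLi).
Proof.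
  apply NoDup_app; [apply VLi_nodup| apply HLi_nodup|].
  intros z H1 H2. apply VLi_prop in H1; apply HLi_prop in H2. tauto.
Qed.

Lemma i_hcoll z : hcoll g z <-> In z HLi.
Proof.
  split.
  - intros [H [H1 H2]]. assert (In z (VLi ++ HLi)) by (apply i_ncoll; split; auto).
    apply in_app_or in H0; destruct H0 as [H0|H0]; auto. apply VLi_prop in H0; tauto.
  - intro H. apply HLi_prop in H. destruct H as [[Hc1 Hv] [H1 _]]. split; auto.
Qed.

Lemma i_vcoll z : vcoll g z <-> In z VLi.
Proof.
  split.
  - intros [H [H1 H2]]. assert (In z (VLi ++ HLi)) by (apply i_ncoll; split; auto).
    apply in_app_or in H0; destruct H0 as [H0|H0]; auto. apply HLi_prop in H0; tauto.
  - intro H. apply VLi_prop in H. destruct H as [[Hc1 Hv] [H1 _]]. split; auto.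
Qed.

Lemma traj_vt_int t M N : P0 + IZR b * (t*k) = IZR M -> 0 + IZR a * (t*k) = IZR N ->
  (l + b*N = a*M)%Z.
Proof.
  intros HM HN. apply IZR_inj. rewrite plus_IZR, !mult_IZR, <- HM, <- HN. unfold P0. field; auto.
Qed.

Let t1 := (IZR (n0 + a) / IZR a) / k.
Let t0 := (IZR n0 / IZR a) / k.

Lemma t1_vt : vtime P0 0 (cos al) (sin al) t1.
Proof.
  rewrite (vt_traj _ _ a b k); auto. unfold t1.
  replace (IZR (n0 + a) / IZR a / k * k) with (IZR (n0 + a) / IZR a) by (field; lra).
  split; [exists (m0 + b)%Z | exists (n0 + a)%Z].
  - unfold P0. apply (Rmult_eq_reg_l (IZR a)); auto.
    rewrite !plus_IZR. field_simplify; auto.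
    replace (IZR a * IZR m0) with (IZR (a*m0)) by (rewrite mult_IZR; auto). rewrite <- Hm0.
    rewrite plus_IZR, mult_IZR. ring.
  - field; auto.
Qed.

Lemma t0_vt : vtime P0 0 (cos al) (sin al) t0.
Proof.
  rewrite (vt_traj _ _ a b k); auto. unfold t0.
  replace (IZR n0 / IZR a / k * k) with (IZR n0 / IZR a) by (field; lra).
  split; [exists m0 | exists n0].
  - unfold P0. apply (Rmult_eq_reg_l (IZR a)); auto.
    field_simplify; auto.
    replace (IZR a * IZR m0) with (IZR (a*m0)) by (rewrite mult_IZR; auto). rewrite <- Hm0.
    rewrite plus_IZR, mult_IZR. ring.
  - field; auto.
Qed.

Lemma t1_pos : 0 < t1.
Proof.
  unfold t1. apply Rdiv_lt_0_compat; auto. apply Rdiv_lt_0_compat; apply IZR_lt; lia.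
Qed.

Lemma i_singular : singular (traj P0 al).
Proof.
  exists t1. split; [|apply t1_vt]. simpl. left. split; [pose proof t1_pos; lra|].
  intros s' [Hs1 Hs2] Hv. rewrite (vt_traj _ _ a b k) in Hv; auto.
  destruct Hv as [[M HM] [N HN]].
  pose proof (traj_vt_int _ _ _ HM HN) as HI.
  assert (Hd : (a | b * (N - n0))%Z) by (exists (M - m0)%Z; lia).
  apply Z.gauss in Hd; auto.
  assert (0 < IZR N < IZR (n0 + a)).
  { rewrite <- HN. unfold t1 in Hs2. split.
    - assert (0 < IZR a) by (apply IZR_lt; lia). assert (0 < s'*k) by nra. nra.
    - assert (0 < IZR a) by (apply IZR_lt; lia).
      assert (s' * k < IZR (n0 + a) / IZR a). { apply (Rmult_lt_compat_r k) in Hs2; auto.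
        replace (IZR (n0 + a) / IZR a / k * k) with (IZR (n0 + a) / IZR a) in Hs2 by (field; lra). auto. }
      apply (Rmult_lt_compat_l (IZR a)) in H0; auto.
      replace (IZR a * (IZR (n0 + a) / IZR a)) with (IZR (n0 + a)) in H0 by (field; auto). lra. }
  destruct H as [H1 H2]; apply lt_IZR in H1; apply lt_IZR in H2.
  destruct Hd as [f Hf]. assert (0 < f * a < a)%Z by lia.
  destruct (Z.lt_trichotomy f 0) as [F|[F|F]]; [nia|subst; lia|nia].
Qed.

Lemma i_points z : points (traj P0 al) z -> points g z.
Proof.
  intros [t [Hd ->]].
  assert (Hr : IZR l + IZR b * IZR n0 = IZR a * IZR m0) by (rewrite <- !mult_IZR, <- plus_IZR, Hm0; auto).
  assert (Hrange : IZR n0 / IZR a <= t*k <= IZR (n0 + a) / IZR a).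
  { simpl in Hd. destruct Hd as [[H1 H2]|[H1 [H2 H3]]].
    - split.
      + assert (IZR n0 <= 0) by (apply IZR_le; lia). assert (0 < IZR a) by (apply IZR_lt; lia).
        assert (IZR n0 / IZR a <= 0). { unfold Rdiv. assert (0 < / IZR a) by (apply Rinv_0_lt_compat; auto). nra. }
        nra.
      + destruct (Rle_dec (t*k) (IZR (n0 + a) / IZR a)); auto. exfalso.
        apply (H2 t1); [|apply t1_vt]. split; [apply t1_pos|]. unfold t1.
        apply (Rmult_lt_reg_r k); auto. replace (IZR (n0 + a) / IZR a / k * k) with (IZR (n0 + a) / IZR a) by (field; lra). lra.
    - assert (Hn : n0 <> 0%Z). { intro E0. apply H2. assert (Ht0 : t0 = 0) by (unfold t0; rewrite E0; simpl; field; split; auto; lra).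
      pose proof t0_vt as V. rewrite Ht0 in V. exact V. }
      assert (0 < IZR a) by (apply IZR_lt; lia). split.
      + destruct (Rle_dec (IZR n0 / IZR a) (t*k)); auto. exfalso.
        apply (H3 t0); [|apply t0_vt]. unfold t0. split.
        * apply (Rmult_lt_reg_r k); auto. replace (IZR n0 / IZR a / k * k) with (IZR n0 / IZR a) by (field; lra). lra.
        * assert (IZR n0 < 0) by (apply IZR_lt; lia). assert (0 < / IZR a) by (apply Rinv_0_lt_compat; auto). assert (0 < / k) by (apply Rinv_0_lt_compat; auto).
          unfold Rdiv. assert (IZR n0 * / IZR a < 0) by nra. nra.
      + assert (0 <= IZR (n0 + a) / IZR a) by (unfold Rdiv; apply Rmult_le_pos; [apply IZR_le; lia| left; apply Rinv_0_lt_compat; auto]). nra. }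
  exists (t - t0). split.
  - apply g_dom. unfold t0. replace ((t - IZR n0 / IZR a / k) * k) with (t*k - IZR n0 / IZR a) by (field; lra).
    rewrite plus_IZR in Hrange. split; [lra|]. 
    replace (IZR n0 / IZR a) with (IZR n0 * / IZR a) in * by auto.
    replace ((IZR n0 + IZR a) / IZR a) with (IZR n0 * / IZR a + 1) in Hrange by (field; auto). lra.
  - unfold g; rewrite (pt_diag _ _ _ a b k), (pt_traj _ _ a b k); auto. unfold t0.
    replace ((t - IZR n0 / IZR a / k) * k) with (t*k - IZR n0 / IZR a) by (field; lra).
    f_equal; f_equal.
    + unfold P0. apply (Rmult_eq_reg_l (IZR a)); auto. field_simplify; auto. rewrite <- Hr. field; auto.
    + field; auto.
Qed.

End S1.

Theorem mainTheorem10 (p q : nat) (P0 alpha0 : R) :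
  (0 < p)%nat -> (0 < q)%nat -> Nat.gcd p q = 2%nat ->
  0 < alpha0 < PI / 2 -> tan alpha0 = INR p / INR q ->
  0 <= P0 < 1 ->
  ((exists l : nat, (l < p / 2)%nat /\ P0 = 2 * INR l / INR p) ->
     singular (traj P0 alpha0) /\
     exists g : path, is_gen_diag g /\
       (forall z, points (traj P0 alpha0) z -> points g z) /\
       gd_length g ((p + q) / 2 - 2) /\
       card_eq (hcoll g) (p / 2 - 1) /\
       card_eq (vcoll g) (q / 2 - 1))
  /\
  (~ (exists l : nat, (l < p / 2)%nat /\ P0 = 2 * INR l / INR p) ->
     in_class (p + q) p (traj P0 alpha0)).
Proof.
  intros Hp Hq Hgcd Hal Htan HP0.
  pose proof (Nat.gcd_divide_l p q) as [a' Ha']. pose proof (Nat.gcd_divide_r p q) as [b' Hb'].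
  rewrite Hgcd in Ha', Hb'.
  assert (Hg' : Nat.gcd a' b' = 1%nat).
  { rewrite Ha', Hb' in Hgcd. rewrite !(Nat.mul_comm _ 2) in Hgcd. rewrite Nat.gcd_mul_mono_l in Hgcd. lia. }
  assert (Ha'0 : (0 < a')%nat) by lia. assert (Hb'0 : (0 < b')%nat) by lia.
  pose proof (Nat.gcd_bezout_pos a' b' Ha'0) as [x [y Hxy]]. rewrite Hg' in Hxy.
  set (a := Z.of_nat a'). set (b := Z.of_nat b').
  assert (Ha : (0 < a)%Z) by lia. assert (Hb : (0 < b)%Z) by lia.
  set (u := Z.of_nat x). set (v := (- Z.of_nat y)%Z).
  assert (Hbez : (u*a + v*b = 1)%Z) by lia.
  assert (Hg : Z.gcd a b = 1%Z).
  { apply Zgcd_1_rel_prime. apply bezout_rel_prime. econstructor. exact Hbez. }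
  assert (Hpdiv : (p / 2 = a')%nat) by (rewrite Ha'; apply Nat.div_mul; lia).
  assert (Hqdiv : (q / 2 = b')%nat) by (rewrite Hb'; apply Nat.div_mul; lia).
  assert (Hpqdiv : ((p + q) / 2 = a' + b')%nat) by (rewrite Ha', Hb', <- Nat.mul_add_distr_r; apply Nat.div_mul; lia).
  assert (HpR : INR p = 2 * IZR a) by (rewrite Ha', mult_INR; unfold a; rewrite <- INR_IZR_INZ; simpl; lra).
  assert (HqR : INR q = 2 * IZR b) by (rewrite Hb', mult_INR; unfold b; rewrite <- INR_IZR_INZ; simpl; lra).
  assert (aR : 0 < IZR a) by (apply IZR_lt; lia). assert (bR : 0 < IZR b) by (apply IZR_lt; lia).
  assert (Hcpos : 0 < cos alpha0) by (apply cos_gt_0; lra).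
  assert (Hspos : 0 < sin alpha0) by (apply sin_gt_0; lra).
  set (k := cos alpha0 / IZR b).
  assert (Hk : 0 < k) by (apply Rdiv_lt_0_compat; auto).
  assert (Hc : cos alpha0 = IZR b * k) by (unfold k; field; lra).
  assert (Hs : sin alpha0 = IZR a * k).
  { unfold tan in Htan. rewrite HpR, HqR in Htan. unfold k.
    apply (Rmult_eq_reg_r (/ cos alpha0)); [|apply Rinv_neq_0_compat; lra].
    replace (sin alpha0 * / cos alpha0) with (sin alpha0 / cos alpha0) by auto. rewrite Htan. field; lra. }
  split.
  - intros [l [Hl HP]]. rewrite Hpdiv in Hl.
    set (L := Z.of_nat l).
    assert (HPL : P0 = IZR L / IZR a) by (rewrite HP, HpR; unfold L; rewrite <- INR_IZR_INZ; field; lra).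
    assert (HL : (0 <= L < a)%Z) by lia.
    set (n0 := (- ((L*v) mod a))%Z). set (m0 := (L*u + b*((L*v)/a))%Z).
    assert (Hn0 : (-a < n0 <= 0)%Z) by (pose proof (Z.mod_pos_bound (L*v) a Ha); lia).
    assert (Hm0 : (L + b*n0 = a*m0)%Z).
    { pose proof (Z.div_mod (L*v) a ltac:(lia)) as Hdm. unfold n0, m0.
      set (qq := ((L*v)/a)%Z) in *. set (rr := ((L*v) mod a)%Z) in *.
      assert (L = L*(u*a + v*b))%Z by (rewrite Hbez; ring). nia. }
    rewrite HPL. split.
    + exact (i_singular a b Ha Hg k alpha0 Hk Hc Hs L n0 m0 Hn0 Hm0).
    + exists (diag m0 n0 alpha0). split; [|split; [|split; [|split]]].
      * exists m0, n0, alpha0. repeat split; lra.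
      * exact (i_points a b Ha u v Hbez k alpha0 Hk Hc Hs L n0 m0 Hn0 Hm0).
      * exists (VLi a b n0 m0 ++ HLi a b n0 m0). split; [|split].
        -- exact (i_nodup a b Ha Hb Hg u v Hbez k alpha0 Hk Hc Hs L n0 m0 HL Hn0).
        -- unfold VLi, HLi. rewrite length_app, !length_map, !Zr_length. lia.
        -- intro z. symmetry. exact (i_ncoll a b Ha Hb u v Hbez k alpha0 Hk Hc Hs n0 m0 z).
      * exists (HLi a b n0 m0). split; [|split].
        -- pose proof (i_nodup a b Ha Hb Hg u v Hbez k alpha0 Hk Hc Hs L n0 m0 HL Hn0).
           apply NoDup_app_remove_l in H. auto.
        -- unfold HLi. rewrite !length_map, !Zr_length. lia.
        -- intro z. symmetry. exact (i_hcoll a b Ha Hb u v Hbez k alpha0 Hk Hc Hs L n0 m0 HL Hn0 z).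
      * exists (VLi a b n0 m0). split; [|split].
        -- pose proof (i_nodup a b Ha Hb Hg u v Hbez k alpha0 Hk Hc Hs L n0 m0 HL Hn0).
           apply NoDup_app_remove_r in H. auto.
        -- unfold VLi. rewrite !length_map, !Zr_length. lia.
        -- intro z. symmetry. exact (i_vcoll a b Ha Hb u v Hbez k alpha0 Hk Hc Hs L n0 m0 HL Hn0 z).
  - intro Hn.
    assert (Gen : ~ exists z, IZR a * P0 = IZR z).
    { intros [z Hz]. apply Hn. exists (Z.to_nat z).
      assert (IZR 0 <= IZR z < IZR a) by (rewrite <- Hz; simpl; split; nra).
      destruct H as [H1 H2]; apply le_IZR in H1; apply lt_IZR in H2.
      split; [lia|]. rewrite INR_IZR_INZ, Z2Nat.id by lia. rewrite HpR, <- Hz. field; lra. }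
    split; [|split; [|split]].
    + exact (ii_periodic a b k P0 alpha0 Hk Hc Hs Gen).
    + exists (VL a b P0 ++ HL a b P0). split; [|split].
      * exact (ii_nodup a b Ha Hb Hg P0 Gen).
      * unfold VL, HL. rewrite length_app, !length_map, !Zr_length. lia.
      * intro z. symmetry. exact (ii_coll a b Ha Hb k P0 alpha0 Hk Hc Hs Gen z).
    + exists (HL a b P0). split; [|split].
      * pose proof (ii_nodup a b Ha Hb Hg P0 Gen). apply NoDup_app_remove_l in H. auto.
      * unfold HL. rewrite !length_map, !Zr_length. lia.
      * intro z. symmetry. exact (ii_hcoll a b Ha Hb k P0 alpha0 Hk Hc Hs Gen z).
    + exists (VL a b P0). split; [|split].
      * pose proof (ii_nodup a b Ha Hb Hg P0 Gen). apply NoDup_app_remove_r in H. auto.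
      * unfold VL. rewrite !length_map, !Zr_length. lia.
      * intro z. symmetry. exact (ii_vcoll a b Ha Hb k P0 alpha0 Hk Hc Hs Gen z).
Qed.
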